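(* Let $r\ge 2$ and define $\phi_r:\mathbb{R}\times\mathbb{R}\to\mathbb{R}$ by $$\phi_r(a,b)=\frac{1}{r}\Big[a_+^r b_+^r+|a_-|^r+|b_-|^r\Big].$$ Then: 1) For any $r\ge 2$, $\phi_r$ is continuously differentiable on $\mathbb{R}\times\mathbb{R}$ with $$\nabla\phi_r(a,b)=\begin{bmatrix} a_+^{r-1}b_+^r-|a_-|^{r-1}\\ a_+^r b_+^{r-1}-|b_-|^{r-1}\end{bmatrix}.$$ Moreover, $\nabla\phi_r(a,b)=0$ if and only if $\phi_r(a,b)=0$. 2) For any $r>2$, $\phi_r$ is twice continuously differentiable on $\mathbb{R}\times\mathbb{R}$ with $$\nabla^2\phi_r(a,b)=\begin{bmatrix}(r-1)(a_+^{r-2}b_+^r+|a_-|^{r-2}) & r\,a_+^{r-1}b_+^{r-1}\\ r\,a_+^{r-1}b_+^{r-1} & (r-1)(a_+^r b_+^{r-2}+|b_-|^{r-2})\end{bmatrix}.$$ 3) For $r=2$, the generalized Hessian of $\phi_2$ at any $(a,b)\in\mathbb{R}\times\mathbb{R}$ satisfies $$\partial\nabla\phi_2(a,b)\subseteq\left\{\begin{bmatrix}u & 2a_+b_+\\ 2a_+b_+ & v\end{bmatrix}:\ u\in\Xi(a,b),\ v\in\Xi(b,a)\right\}.$$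
   Context: For $a\in\mathbb{R}$, $a_+:=\max\{a,0\}$ and $a_-:=\min\{a,0\}$; $a_+^r$ means $(a_+)^r$. The set $\Xi(a,b)\subseteq\mathbb{R}$ is defined by $\Xi(a,b)=\{b_+^2\}$ if $a>0$, $\Xi(a,b)=\mathrm{co}\{1,b_+^2\}$ (the closed interval between $1$ and $b_+^2$) if $a=0$, and $\Xi(a,b)=\{1\}$ if $a<0$. For a locally Lipschitz map $F:\mathbb{R}^n\to\mathbb{R}^m$, the (Clarke) generalized Jacobian is $\partial F(x)=\mathrm{co}\{\lim \nabla F(x^k): x^k\to x,\ x^k\in D_F\}$, where $D_F$ is the set of points where $F$ is differentiable; for a continuously differentiable function $\varphi$, its generalized Hessian is $\partial\nabla\varphi(x)$, the generalized Jacobian of $\nabla\varphi$. *)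

(* Defs.v *)
From Stdlib Require Import Reals Lra List.
From Coquelicot Require Import Coquelicot.
Open Scope R_scope.

(* x^r for x >= 0 and real r > 0, with the convention 0^r = 0
   (Stdlib's Rpower is only meaningful for positive bases). *)
Definition ppow (x r : R) : R := if Rlt_dec 0 x then Rpower x r else 0.

Definition pospart (a : R) : R := Rmax a 0.
Definition negpart (a : R) : R := Rmin a 0.

Definition phi (r : R) (p : R * R) : R :=
  let a := fst p in let b := snd p in
  / r * (ppow (pospart a) r * ppow (pospart b) r + ppow (Rabs (negpart a)) r
         + ppow (Rabs (negpart b)) r).

Definition grad_phi (r : R) (p : R * R) : R * R :=
  let a := fst p in let b := snd p in
  (ppow (pospart a) (r - 1) * ppow (pospart b) r - ppow (Rabs (negpart a)) (r - 1),
   ppow (pospart a) r * ppow (pospart b) (r - 1) - ppow (Rabs (negpart b)) (r - 1)).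

Record M2 := mkM2 { m11 : R; m12 : R; m21 : R; m22 : R }.

Definition M2_apply (M : M2) (h : R * R) : R * R :=
  (m11 M * fst h + m12 M * snd h, m21 M * fst h + m22 M * snd h).

Definition hess_phi (r : R) (p : R * R) : M2 :=
  let a := fst p in let b := snd p in
  mkM2 ((r - 1) * (ppow (pospart a) (r - 2) * ppow (pospart b) r + ppow (Rabs (negpart a)) (r - 2)))
       (r * ppow (pospart a) (r - 1) * ppow (pospart b) (r - 1))
       (r * ppow (pospart a) (r - 1) * ppow (pospart b) (r - 1))
       ((r - 1) * (ppow (pospart a) r * ppow (pospart b) (r - 2) + ppow (Rabs (negpart b)) (r - 2))).

Definition has_grad (f : R * R -> R) (p : R * R) (g : R * R) : Prop :=
  filterdiff f (locally p) (fun h => fst g * fst h + snd g * snd h).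

Definition has_jac (F : R * R -> R * R) (p : R * R) (J : M2) : Prop :=
  filterdiff F (locally p) (M2_apply J).

Definition M2_continuous (H : R * R -> M2) : Prop :=
  forall p, continuous (fun q => m11 (H q)) p /\ continuous (fun q => m12 (H q)) p
         /\ continuous (fun q => m21 (H q)) p /\ continuous (fun q => m22 (H q)) p.

Definition C1_with_grad (f : R * R -> R) (G : R * R -> R * R) : Prop :=
  (forall p, has_grad f p (G p)) /\ (forall p, continuous G p).

Definition C2_with_hess (f : R * R -> R) (G : R * R -> R * R) (H : R * R -> M2) : Prop :=
  C1_with_grad f G /\ (forall p, has_jac G p (H p)) /\ M2_continuous H.

Definition M2_lim (Js : nat -> M2) (M : M2) : Prop :=
  is_lim_seq (fun k => m11 (Js k)) (m11 M) /\ is_lim_seq (fun k => m12 (Js k)) (m12 M)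
  /\ is_lim_seq (fun k => m21 (Js k)) (m21 M) /\ is_lim_seq (fun k => m22 (Js k)) (m22 M).

Definition limiting_jacobians (F : R * R -> R * R) (x : R * R) (M : M2) : Prop :=
  exists (xs : nat -> R * R) (Js : nat -> M2),
    filterlim xs eventually (locally x) /\
    (forall k, has_jac F (xs k) (Js k)) /\ M2_lim Js M.

Definition M2_zero : M2 := mkM2 0 0 0 0.
Definition M2_add (A B : M2) : M2 :=
  mkM2 (m11 A + m11 B) (m12 A + m12 B) (m21 A + m21 B) (m22 A + m22 B).
Definition M2_scale (c : R) (A : M2) : M2 :=
  mkM2 (c * m11 A) (c * m12 A) (c * m21 A) (c * m22 A).

Definition M2_co (S : M2 -> Prop) (M : M2) : Prop :=
  exists l : list (R * M2)%type,
    List.Forall (fun wA => 0 <= fst wA /\ S (snd wA)) l /\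
    fold_right Rplus 0 (map fst l) = 1 /\
    M = fold_right (fun wA acc => M2_add (M2_scale (fst wA) (snd wA)) acc) M2_zero l.

Definition clarke_jac (F : R * R -> R * R) (x : R * R) (M : M2) : Prop :=
  M2_co (limiting_jacobians F x) M.

Definition Xi (a b : R) (u : R) : Prop :=
  (a > 0 /\ u = (pospart b) ^ 2) \/
  (a = 0 /\ Rmin 1 ((pospart b) ^ 2) <= u <= Rmax 1 ((pospart b) ^ 2)) \/
  (a < 0 /\ u = 1).

(* Main.v *)
Require Import Defs.
From Stdlib Require Import Reals Lra List.
From Coquelicot Require Import Coquelicot.
Open Scope R_scope.

Definition P (s x : R) : R := ppow (pospart x) s.

Lemma P_pos s x : 0 < x -> P s x = Rpower x s.
Proof.
  intros H. unfold P, ppow, pospart. rewrite Rmax_left by lra.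
  destruct (Rlt_dec 0 x); [reflexivity | lra].
Qed.

Lemma P_npos s x : x <= 0 -> P s x = 0.
Proof.
  intros H. unfold P, ppow, pospart. rewrite Rmax_right by lra.
  destruct (Rlt_dec 0 0); [lra | reflexivity].
Qed.

Lemma P_ge0 s x : 0 <= P s x.
Proof.
  destruct (Rlt_or_le 0 x) as [H|H].
  - rewrite P_pos by exact H. unfold Rpower. left; apply exp_pos.
  - rewrite P_npos by exact H. lra.
Qed.

Lemma P_gt0 s x : 0 < x -> 0 < P s x.
Proof. intros H. rewrite P_pos by exact H. unfold Rpower. apply exp_pos. Qed.

Lemma absneg x : Rabs (negpart x) = pospart (- x).
Proof.
  unfold negpart, pospart. destruct (Rle_dec x 0).
  - rewrite Rmin_left by lra. rewrite Rmax_left by lra. apply Rabs_left1; lra.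
  - rewrite Rmin_right by lra. rewrite Rmax_right by lra. apply Rabs_R0.
Qed.

Lemma small_pow s eps : 0 < s -> 0 < eps ->
  exists delta, 0 < delta /\ forall h, 0 < h < delta -> Rpower h s < eps.
Proof.
  intros Hs He. exists (Rpower eps (/ s)). split.
  - unfold Rpower; apply exp_pos.
  - intros h Hh. apply Rlt_le_trans with (Rpower (Rpower eps (/ s)) s).
    + apply Rlt_Rpower_l; lra.
    + rewrite Rpower_mult, Rinv_l by lra. rewrite Rpower_1 by lra. lra.
Qed.

Lemma P_derive r x : 1 < r -> is_derive (P r) x (r * P (r - 1) x).
Proof.
  intros Hr. destruct (Rtotal_order x 0) as [Hx|[Hx|Hx]].
  - rewrite (P_npos _ x) by lra.
    apply is_derive_ext_loc with (fun _ => 0).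
    + eapply filter_imp; [|apply (open_lt 0 x Hx)]. intros t Ht. simpl in Ht. rewrite P_npos; lra.
    + replace (r * 0) with (@zero R_NormedModule).
      apply is_derive_const. simpl. unfold zero; simpl. ring.
  - subst x. rewrite (P_npos _ 0) by lra. apply is_derive_Reals.
    intros eps Heps. destruct (small_pow (r - 1) eps) as [d [Hd Hd']]; try lra.
    exists (mkposreal d Hd). intros h Hh0 Hh. simpl in Hh.
    rewrite Rplus_0_l, (P_npos r 0) by lra.
    destruct (Rlt_or_le 0 h) as [Hp|Hn].
    + rewrite P_pos by lra.
      replace r with (1 + (r - 1)) at 1 by ring. rewrite Rpower_plus, Rpower_1 by lra.
      replace ((h * Rpower h (r - 1) - 0) / h - r * 0) with (Rpower h (r - 1)) by (field; lra).
      rewrite Rabs_pos_eq by (unfold Rpower; left; apply exp_pos).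
      apply Hd'. rewrite Rabs_pos_eq in Hh; lra.
    + rewrite P_npos by lra. replace ((0 - 0) / h - r * 0) with 0 by (field; lra).
      rewrite Rabs_R0; lra.
  - rewrite (P_pos _ x) by lra.
    apply is_derive_ext_loc with (fun t => Rpower t r).
    + eapply filter_imp; [|apply (open_gt 0 x Hx)]. intros t Ht. simpl in Ht. rewrite P_pos; lra.
    + apply is_derive_Reals. apply derivable_pt_lim_power. lra.
Qed.

Lemma P_cont s x : 0 < s -> continuous (P s) x.
Proof.
  intros Hs. destruct (Rtotal_order x 0) as [Hx|[Hx|Hx]].
  - apply continuous_ext_loc with (fun _ => 0).
    + eapply filter_imp; [|apply (open_lt 0 x Hx)]. intros t Ht. simpl in Ht. rewrite P_npos; lra.
    + apply continuous_const.
  - subst x. apply continuity_pt_filterlim.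
    intros eps Heps. destruct (small_pow s eps) as [d [Hd Hd']]; try lra.
    exists d. split; [lra|]. intros y [_ Hy]. unfold R_dist in *. simpl in *.
    unfold R_dist in *.
    rewrite (P_npos s 0) by lra. rewrite Rminus_0_r in *.
    destruct (Rlt_or_le 0 y) as [Hp|Hn].
    + rewrite P_pos by lra. rewrite Rabs_pos_eq by (unfold Rpower; left; apply exp_pos).
      apply Hd'. rewrite Rabs_pos_eq in Hy; lra.
    + rewrite P_npos by lra. rewrite Rabs_R0; lra.
  - apply continuous_ext_loc with (fun t => Rpower t s).
    + eapply filter_imp; [|apply (open_gt 0 x Hx)]. intros t Ht. simpl in Ht. rewrite P_pos; lra.
    + apply (@ex_derive_continuous R_AbsRing R_NormedModule). exists (s * Rpower x (s - 1)).
      apply is_derive_Reals. apply derivable_pt_lim_power. lra.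
Qed.
Lemma L_fst (f : R -> R) a b d : is_derive f a d ->
  filterdiff (fun q : R * R => f (fst q)) (locally (a, b)) (fun h => d * fst h).
Proof.
  intros Hf. eapply filterdiff_ext_lin.
  - apply (filterdiff_comp' (fun q : R * R => fst q) f (a, b) (fun q => fst q) (fun y => scal y d)).
    + apply filterdiff_linear, is_linear_fst.
    + exact Hf.
  - intros h. simpl. unfold scal; simpl. unfold mult; simpl. ring.
Qed.

Lemma L_snd (f : R -> R) a b d : is_derive f b d ->
  filterdiff (fun q : R * R => f (snd q)) (locally (a, b)) (fun h => d * snd h).
Proof.
  intros Hf. eapply filterdiff_ext_lin.
  - apply (filterdiff_comp' (fun q : R * R => snd q) f (a, b) (fun q => snd q) (fun y => scal y d)).
    + apply filterdiff_linear, is_linear_snd.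
    + exact Hf.
  - intros h. simpl. unfold scal; simpl. unfold mult; simpl. ring.
Qed.

Lemma L2 (f1 f2 f3 f4 : R -> R) a b d1 d2 d3 d4 :
  is_derive f1 a d1 -> is_derive f2 b d2 -> is_derive f3 a d3 -> is_derive f4 b d4 ->
  filterdiff (fun q : R * R => f1 (fst q) * f2 (snd q) + f3 (fst q) + f4 (snd q)) (locally (a, b))
    (fun h => (d1 * f2 b + d3) * fst h + (f1 a * d2 + d4) * snd h).
Proof.
  intros H1 H2 H3 H4.
  pose proof (L_fst f1 a b d1 H1) as G1.
  pose proof (L_snd f2 a b d2 H2) as G2.
  pose proof (L_fst f3 a b d3 H3) as G3.
  pose proof (L_snd f4 a b d4 H4) as G4.
  pose proof (filterdiff_mult_fct _ _ (a, b) _ _ Rmult_comm G1 G2) as G12.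
  pose proof (filterdiff_plus_fct _ _ _ _ G12 G3) as G123.
  pose proof (filterdiff_plus_fct _ _ _ _ G123 G4) as G.
  eapply filterdiff_ext_lin; [eapply filterdiff_ext; [|exact G]|].
  - intros y. reflexivity.
  - intros h. simpl. unfold plus, mult; simpl. ring.
Qed.

Lemma C2 (f1 f2 f3 f4 : R -> R) a b :
  continuous f1 a -> continuous f2 b -> continuous f3 a -> continuous f4 b ->
  continuous (fun q : R * R => f1 (fst q) * f2 (snd q) + f3 (fst q) + f4 (snd q)) (a, b).
Proof.
  intros H1 H2 H3 H4.
  assert (G1 : continuous (fun q : R * R => f1 (fst q)) (a, b))
    by (apply (continuous_comp (fun q : R * R => fst q) f1); [apply continuous_fst | exact H1]).
  assert (G2 : continuous (fun q : R * R => f2 (snd q)) (a, b))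
    by (apply (continuous_comp (fun q : R * R => snd q) f2); [apply continuous_snd | exact H2]).
  assert (G3 : continuous (fun q : R * R => f3 (fst q)) (a, b))
    by (apply (continuous_comp (fun q : R * R => fst q) f3); [apply continuous_fst | exact H3]).
  assert (G4 : continuous (fun q : R * R => f4 (snd q)) (a, b))
    by (apply (continuous_comp (fun q : R * R => snd q) f4); [apply continuous_snd | exact H4]).
  pose proof (continuous_mult _ _ _ G1 G2) as G12.
  pose proof (continuous_plus _ _ _ G12 G3) as G123.
  pose proof (continuous_plus _ _ _ G123 G4) as G.
  exact G.
Qed.

Lemma fd_pair {U : NormedModule R_AbsRing} (f g : U -> R) p l1 l2 :
  filterdiff f (locally p) l1 -> filterdiff g (locally p) l2 ->
  filterdiff (fun q => (f q, g q)) (locally p) (fun h => (l1 h, l2 h)).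
Proof.
  intros Hf Hg.
  apply (filterdiff_comp_2 f g (fun x y : R => (x, y)) l1 l2 (fun x y : R => (x, y)) Hf Hg).
  apply filterdiff_linear. apply is_linear_prod; [apply is_linear_fst | apply is_linear_snd].
Qed.

Lemma cont_pair (f g : R * R -> R) p :
  continuous f p -> continuous g p -> continuous (fun q => (f q, g q)) p.
Proof.
  intros Hf Hg.
  apply (continuous_comp_2 f g (fun x y : R => (x, y)) p Hf Hg).
  apply continuous_ext with (f := fun y => y). { intros [x y]; reflexivity. }
  apply continuous_id.
Qed.

Lemma cont_neg (f : R -> R) x : continuous f (- x) -> continuous (fun t => f (- t)) x.
Proof.
  intros H. apply (continuous_comp Ropp f). 2: exact H.
  apply (@ex_derive_continuous R_AbsRing R_NormedModule). exists (-1).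
  apply is_derive_Reals. apply derivable_pt_lim_opp. apply derivable_pt_lim_id.
Qed.

Lemma der_neg (f : R -> R) x d : is_derive f (- x) d -> is_derive (fun t => f (- t)) x (- d).
Proof.
  intros H. replace (- d) with (@scal R_AbsRing R_NormedModule (-1) d)
    by (unfold scal; simpl; unfold mult; simpl; ring).
  apply (is_derive_comp f Ropp x d (-1) H).
  apply is_derive_Reals. apply derivable_pt_lim_opp. apply derivable_pt_lim_id.
Qed.

Lemma P_zero_iff s x : P s x = 0 <-> x <= 0.
Proof.
  split; intros H.
  - destruct (Rlt_or_le 0 x) as [Hp|Hn]; [|exact Hn].
    pose proof (P_gt0 s x Hp); lra.
  - apply P_npos; exact H.
Qed.

Lemma P1 x : P 1 x = pospart x.
Proof.
  destruct (Rlt_or_le 0 x) as [Hp|Hn].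
  - rewrite P_pos, Rpower_1 by lra. unfold pospart. rewrite Rmax_left; lra.
  - rewrite P_npos by lra. unfold pospart. rewrite Rmax_right; lra.
Qed.

Lemma P2 x : P 2 x = pospart x ^ 2.
Proof.
  destruct (Rlt_or_le 0 x) as [Hp|Hn].
  - rewrite P_pos by lra. replace 2 with (INR 2) at 1 by (simpl; ring).
    rewrite Rpower_pow by lra. unfold pospart. rewrite Rmax_left; lra.
  - rewrite P_npos by lra. unfold pospart. rewrite Rmax_right by lra. ring.
Qed.

Lemma phi_eq r q : phi r q = / r * (P r (fst q) * P r (snd q) + P r (- fst q) + P r (- snd q)).
Proof. unfold phi, P. rewrite !absneg. reflexivity. Qed.

Lemma grad_eq r q : grad_phi r q =
  (P (r - 1) (fst q) * P r (snd q) - P (r - 1) (- fst q),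
   P r (fst q) * P (r - 1) (snd q) - P (r - 1) (- snd q)).
Proof. unfold grad_phi, P. rewrite !absneg. reflexivity. Qed.

Lemma der0 (x : R) : is_derive (fun _ : R => 0) x 0.
Proof. apply is_derive_Reals. apply derivable_pt_lim_const. Qed.

Lemma der_mn s x : 1 < s -> is_derive (fun t => - P s (- t)) x (s * P (s - 1) (- x)).
Proof.
  intros Hs. apply is_derive_Reals.
  replace (s * P (s - 1) (- x)) with (- (- (s * P (s - 1) (- x)))) by ring.
  apply derivable_pt_lim_opp. apply is_derive_Reals. apply der_neg. apply P_derive. exact Hs.
Qed.

Lemma cont_scal c (f : R -> R) x : continuous f x -> continuous (fun t => c * f t) x.
Proof.
  intros H. apply (continuous_mult (fun _ => c) f). apply continuous_const. exact H.
Qed.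

Lemma cont_mn s x : 0 < s -> continuous (fun t => - P s (- t)) x.
Proof.
  intros Hs. apply continuous_ext with (f := fun t => (-1) * P s (- t)). { intros t; simpl; ring. }
  apply cont_scal. apply cont_neg. apply P_cont. exact Hs.
Qed.

Lemma part1_grad r p : 2 <= r -> has_grad (phi r) p (grad_phi r p).
Proof.
  intros Hr. destruct p as [a b]. unfold has_grad.
  assert (Hr1 : 1 < r) by lra.
  pose proof (L2 (fun x => /r * P r x) (P r) (fun x => /r * P r (-x)) (fun x => /r * P r (-x)) a b _ _ _ _
   (is_derive_scal _ _ (/r) _ (P_derive r a Hr1))
   (P_derive r b Hr1)
   (is_derive_scal _ _ (/r) _ (der_neg _ _ _ (P_derive r (-a) Hr1)))
   (is_derive_scal _ _ (/r) _ (der_neg _ _ _ (P_derive r (-b) Hr1)))) as G.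
  eapply filterdiff_ext_lin; [eapply filterdiff_ext; [|exact G]|].
  - intros [x y]. rewrite phi_eq. simpl. ring.
  - intros [h1 h2]. rewrite grad_eq. simpl. field. lra.
Qed.

Lemma part1_cont r p : 2 <= r -> continuous (grad_phi r) p.
Proof.
  intros Hr. destruct p as [a b].
  apply continuous_ext with (f := fun q => (P (r - 1) (fst q) * P r (snd q) + (fun t => - P (r-1) (-t)) (fst q) + (fun _ => 0) (snd q),
     P r (fst q) * P (r - 1) (snd q) + (fun _ => 0) (fst q) + (fun t => - P (r-1) (-t)) (snd q))).
  { intros q. rewrite grad_eq. f_equal; ring. }
  apply cont_pair.
  - apply (C2 (P (r-1)) (P r) (fun t => - P (r-1) (-t)) (fun _ => 0));
      try apply P_cont; try apply cont_mn; try apply continuous_const; lra.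
  - apply (C2 (P r) (P (r-1)) (fun _ => 0) (fun t => - P (r-1) (-t)));
      try apply P_cont; try apply cont_mn; try apply continuous_const; lra.
Qed.

Lemma part1_zero r p : 2 <= r -> (grad_phi r p = (0, 0) <-> phi r p = 0).
Proof.
  intros Hr. destruct p as [a b]. rewrite grad_eq, phi_eq. simpl.
  pose proof (P_ge0 r a). pose proof (P_ge0 r b). pose proof (P_ge0 r (-a)). pose proof (P_ge0 r (-b)).
  pose proof (P_ge0 (r-1) a). pose proof (P_ge0 (r-1) b). pose proof (P_ge0 (r-1) (-a)). pose proof (P_ge0 (r-1) (-b)).
  assert (Hri : 0 < / r) by (apply Rinv_0_lt_compat; lra).
  split.
  - intros HH. injection HH as E1 E2.
    assert (Ha : 0 <= a).
    { destruct (Rlt_or_le a 0) as [Ha|Ha]; [|exact Ha].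
      rewrite (P_npos (r-1) a) in E1 by lra. pose proof (P_gt0 (r-1) (-a)). lra. }
    assert (Hb : 0 <= b).
    { destruct (Rlt_or_le b 0) as [Hb|Hb]; [|exact Hb].
      rewrite (P_npos (r-1) b) in E2 by lra. pose proof (P_gt0 (r-1) (-b)). lra. }
    rewrite (P_npos r (-a)), (P_npos r (-b)) by lra.
    rewrite (P_npos (r-1) (-a)) in E1 by lra.
    assert (a <= 0 \/ b <= 0) as [Z|Z].
    { destruct (Rlt_or_le 0 a) as [Ha'|Ha']; [|left; exact Ha'].
      destruct (Rlt_or_le 0 b) as [Hb'|Hb']; [|right; exact Hb'].
      pose proof (P_gt0 (r-1) a Ha'). pose proof (P_gt0 r b Hb').
      exfalso. assert (0 < P (r-1) a * P r b) by (apply Rmult_lt_0_compat; lra). lra. }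
    + rewrite (P_npos r a) by lra. ring.
    + rewrite (P_npos r b) by lra. ring.
  - intros HH.
    assert (HS : P r a * P r b + P r (- a) + P r (- b) = 0).
    { apply (Rmult_eq_reg_l (/ r)); [|lra]. rewrite HH. ring. }
    assert (0 <= P r a * P r b) by (apply Rmult_le_pos; lra).
    assert (Ha : - a <= 0) by (apply (P_zero_iff r); lra).
    assert (Hb : - b <= 0) by (apply (P_zero_iff r); lra).
    rewrite (P_npos (r-1) (-a)), (P_npos (r-1) (-b)) by lra.
    assert (a <= 0 \/ b <= 0) as [Z|Z].
    { destruct (Rlt_or_le 0 a) as [Ha'|Ha']; [|left; exact Ha'].
      destruct (Rlt_or_le 0 b) as [Hb'|Hb']; [|right; exact Hb'].
      pose proof (P_gt0 r a Ha'). pose proof (P_gt0 r b Hb').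
      exfalso. assert (0 < P r a * P r b) by (apply Rmult_lt_0_compat; lra). lra. }
    + rewrite (P_npos r a), (P_npos (r-1) a) by lra. f_equal; ring.
    + rewrite (P_npos r b), (P_npos (r-1) b) by lra. f_equal; ring.
Qed.

Lemma part2_jac r p : 2 < r -> has_jac (grad_phi r) p (hess_phi r p).
Proof.
  intros Hr. destruct p as [a b]. unfold has_jac.
  assert (Hr1 : 1 < r) by lra. assert (Hr2 : 1 < r - 1) by lra.
  pose proof (L2 (P (r-1)) (P r) (fun t => - P (r-1) (-t)) (fun _ => 0) a b _ _ _ _
    (P_derive (r-1) a Hr2) (P_derive r b Hr1) (der_mn (r-1) a Hr2) (der0 b)) as G1.
  pose proof (L2 (P r) (P (r-1)) (fun _ => 0) (fun t => - P (r-1) (-t)) a b _ _ _ _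
    (P_derive r a Hr1) (P_derive (r-1) b Hr2) (der0 a) (der_mn (r-1) b Hr2)) as G2.
  pose proof (fd_pair _ _ _ _ _ G1 G2) as G.
  eapply filterdiff_ext_lin; [eapply filterdiff_ext; [|exact G]|].
  - intros q. rewrite grad_eq. f_equal; ring.
  - intros [h1 h2]. unfold M2_apply, hess_phi. simpl. unfold P. rewrite !absneg. fold (P (r-2) a).
    replace (r - 1 - 1) with (r - 2) by ring. unfold P. f_equal; ring.
Qed.

Lemma part2_cont r : 2 < r -> M2_continuous (hess_phi r).
Proof.
  intros Hr [a b].
  assert (Hr0 : 0 < r) by lra. assert (Hr1 : 0 < r - 1) by lra. assert (Hr2 : 0 < r - 2) by lra.
  unfold hess_phi; simpl. unfold P. 
  repeat split.
  - apply continuous_ext with (f := fun q : R * R => (fun t => (r-1) * P (r-2) t) (fst q) * P r (snd q)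
        + (fun t => (r-1) * P (r-2) (-t)) (fst q) + (fun _ => 0) (snd q)).
    { intros q. unfold P. rewrite !absneg. simpl. ring. }
    apply (C2 (fun t => (r-1) * P (r-2) t) (P r) (fun t => (r-1) * P (r-2) (-t)) (fun _ => 0));
      try apply cont_scal; try apply cont_neg; try apply P_cont; try apply continuous_const; lra.
  - apply continuous_ext with (f := fun q : R * R => (fun t => r * P (r-1) t) (fst q) * P (r-1) (snd q)
        + (fun _ => 0) (fst q) + (fun _ => 0) (snd q)).
    { intros q. unfold P. simpl. ring. }
    apply (C2 (fun t => r * P (r-1) t) (P (r-1)) (fun _ => 0) (fun _ => 0));
      try apply cont_scal; try apply P_cont; try apply continuous_const; lra.
  - apply continuous_ext with (f := fun q : R * R => (fun t => r * P (r-1) t) (fst q) * P (r-1) (snd q)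
        + (fun _ => 0) (fst q) + (fun _ => 0) (snd q)).
    { intros q. unfold P. simpl. ring. }
    apply (C2 (fun t => r * P (r-1) t) (P (r-1)) (fun _ => 0) (fun _ => 0));
      try apply cont_scal; try apply P_cont; try apply continuous_const; lra.
  - apply continuous_ext with (f := fun q : R * R => (fun t => (r-1) * P r t) (fst q) * P (r-2) (snd q)
        + (fun _ => 0) (fst q) + (fun t => (r-1) * P (r-2) (-t)) (snd q)).
    { intros q. unfold P. rewrite !absneg. simpl. ring. }
    apply (C2 (fun t => (r-1) * P r t) (P (r-2)) (fun _ => 0) (fun t => (r-1) * P (r-2) (-t)));
      try apply cont_scal; try apply cont_neg; try apply P_cont; try apply continuous_const; lra.
Qed.

Lemma dir_deriv F q J d1 d2 : has_jac F q J ->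
  derivable_pt_lim (fun t => fst (F (fst q + t*d1, snd q + t*d2))) 0 (m11 J * d1 + m12 J * d2) /\
  derivable_pt_lim (fun t => snd (F (fst q + t*d1, snd q + t*d2))) 0 (m21 J * d1 + m22 J * d2).
Proof.
  intros HJ. unfold has_jac in HJ.
  assert (Hf : filterdiff (fun t : R => (fst q + t*d1, snd q + t*d2)) (locally 0) (fun t => (t*d1, t*d2))).
  { eapply filterdiff_ext_lin.
    - apply (fd_pair (fun t : R => fst q + t*d1) (fun t => snd q + t*d2) 0 (fun t => scal t d1) (fun t => scal t d2)).
      + assert (H : is_derive (fun t : R => fst q + t*d1) 0 d1) by (auto_derive; [auto|ring]). exact H.
      + assert (H : is_derive (fun t : R => snd q + t*d2) 0 d2) by (auto_derive; [auto|ring]). exact H.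
    - intros t. reflexivity. }
  assert (Hq : (fst q + 0*d1, snd q + 0*d2) = q) by (destruct q; simpl; f_equal; ring).
  rewrite <- Hq in HJ.
  pose proof (filterdiff_comp' _ _ 0 _ _ Hf HJ) as G.
  split; apply is_derive_Reals.
  - pose proof (filterdiff_comp' _ (fun v : R*R => fst v) 0 _ (fun v => fst v) G (filterdiff_linear _ is_linear_fst)) as G'.
    unfold is_derive. eapply filterdiff_ext_lin; [exact G'|].
    intros t; unfold M2_apply; simpl; unfold scal; simpl; unfold mult; simpl; ring.
  - pose proof (filterdiff_comp' _ (fun v : R*R => snd v) 0 _ (fun v => snd v) G (filterdiff_linear _ is_linear_snd)) as G'.
    unfold is_derive. eapply filterdiff_ext_lin; [exact G'|].
    intros t; unfold M2_apply; simpl; unfold scal; simpl; unfold mult; simpl; ring.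
Qed.

Lemma onesided g l k : derivable_pt_lim g 0 l ->
  (exists delta, 0 < delta /\ forall t, 0 < t < delta -> g t - g 0 = t * k) -> l = k.
Proof.
  intros Hd [d [Hd0 Hk]]. destruct (Req_dec l k) as [E|NE]; [exact E|]. exfalso.
  destruct (Hd (Rabs (k - l))) as [del Hdel]. { apply Rabs_pos_lt; lra. }
  pose proof (cond_pos del) as Hdp.
  set (t := Rmin d del / 2).
  assert (Ht0 : 0 < t) by (unfold t; apply Rmin_case; lra).
  assert (Ht1 : t < d) by (unfold t; pose proof (Rmin_l d del); lra).
  assert (Ht2 : t < del) by (unfold t; pose proof (Rmin_r d del); lra).
  specialize (Hdel t ltac:(lra) ltac:(rewrite Rabs_pos_eq; lra)).
  rewrite Rplus_0_l, (Hk t) in Hdel by lra.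
  replace (t * k / t - l) with (k - l) in Hdel by (field; lra). lra.
Qed.

Lemma dpl_ext f g x l : (forall t, f t = g t) -> derivable_pt_lim f x l -> derivable_pt_lim g x l.
Proof.
  intros E H. apply is_derive_Reals. apply is_derive_Reals in H. eapply is_derive_ext; [exact E|exact H].
Qed.

Lemma pp_pos x : 0 <= x -> pospart x = x.
Proof. intros; unfold pospart; rewrite Rmax_left; lra. Qed.
Lemma pp_neg x : x <= 0 -> pospart x = 0.
Proof. intros; unfold pospart; rewrite Rmax_right; lra. Qed.

Lemma grad2 q : grad_phi 2 q =
  (pospart (fst q) * pospart (snd q) ^ 2 - pospart (- fst q),
   pospart (fst q) ^ 2 * pospart (snd q) - pospart (- snd q)).
Proof. rewrite grad_eq. replace (2 - 1) with 1 by ring. rewrite !P1, !P2. reflexivity. Qed.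

Lemma der_sq_shift c b : derivable_pt_lim (fun t => c * P 2 (b + t)) 0 (c * (2 * pospart b)).
Proof.
  apply is_derive_Reals.
  pose proof (P_derive 2 (b + 0) ltac:(lra)) as Hb.
  assert (Hl : is_derive (fun t : R => b + t) 0 1) by (auto_derive; [auto|ring]).
  pose proof (is_derive_comp (P 2) (fun t => b + t) 0 _ 1 Hb Hl) as H.
  apply (is_derive_scal _ _ c) in H.
  replace (c * (2 * pospart b)) with (c * scal 1 (2 * P (2 - 1) (b + 0))). exact H.
  unfold scal; simpl; unfold mult; simpl. replace (2 - 1) with 1 by ring. rewrite P1, Rplus_0_r. ring.
Qed.

Lemma jac_info a b J : has_jac (grad_phi 2) (a, b) J ->
  (0 <= a -> m11 J = pospart b ^ 2) /\ (a < 0 -> m11 J = 1) /\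
  m12 J = 2 * pospart a * pospart b /\ m21 J = 2 * pospart a * pospart b /\
  (0 <= b -> m22 J = pospart a ^ 2) /\ (b < 0 -> m22 J = 1).
Proof.
  intros HJ.
  destruct (dir_deriv _ _ _ 1 0 HJ) as [D11 D21].
  destruct (dir_deriv _ _ _ 0 1 HJ) as [D12 D22].
  cbn [fst snd] in D11, D21, D12, D22.
  apply (dpl_ext _ (fun t => pospart (a + t) * pospart b ^ 2 - pospart (- (a + t)))) in D11;
    [| intros t; rewrite grad2; cbn [fst snd]; replace (a + t * 1) with (a + t) by ring;
       replace (b + t * 0) with b by ring; reflexivity].
  apply (dpl_ext _ (fun t => pospart b * P 2 (a + t) - pospart (- b))) in D21;
    [| intros t; rewrite grad2; cbn [fst snd]; replace (a + t * 1) with (a + t) by ring;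
       replace (b + t * 0) with b by ring; rewrite P2; ring].
  apply (dpl_ext _ (fun t => pospart a * P 2 (b + t) - pospart (- a))) in D12;
    [| intros t; rewrite grad2; cbn [fst snd]; replace (b + t * 1) with (b + t) by ring;
       replace (a + t * 0) with a by ring; rewrite P2; ring].
  apply (dpl_ext _ (fun t => pospart a ^ 2 * pospart (b + t) - pospart (- (b + t)))) in D22;
    [| intros t; rewrite grad2; cbn [fst snd]; replace (b + t * 1) with (b + t) by ring;
       replace (a + t * 0) with a by ring; reflexivity].
  assert (E12 : m11 J * 0 + m12 J * 1 = pospart a * (2 * pospart b)).
  { eapply uniqueness_limite; [exact D12|].
    replace (pospart a * (2 * pospart b)) with (pospart a * (2 * pospart b) - 0) by ring.
    apply derivable_pt_lim_minus; [apply der_sq_shift | apply derivable_pt_lim_const]. }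
  assert (E21 : m21 J * 1 + m22 J * 0 = pospart b * (2 * pospart a)).
  { eapply uniqueness_limite; [exact D21|].
    replace (pospart b * (2 * pospart a)) with (pospart b * (2 * pospart a) - 0) by ring.
    apply derivable_pt_lim_minus; [apply der_sq_shift | apply derivable_pt_lim_const]. }
  split; [|split; [|split; [|split; [|split]]]].
  - intros Ha. replace (m11 J) with (m11 J * 1 + m12 J * 0) by ring.
    apply (onesided _ _ _ D11). exists 1. split; [lra|]. intros t Ht.
    rewrite !Rplus_0_r. rewrite (pp_pos (a + t)), (pp_pos a), (pp_neg (- (a + t))), (pp_neg (- a)) by lra. ring.
  - intros Ha. replace (m11 J) with (m11 J * 1 + m12 J * 0) by ring.
    apply (onesided _ _ _ D11). exists (- a). split; [lra|]. intros t Ht.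
    rewrite !Rplus_0_r. rewrite (pp_neg (a + t)), (pp_neg a), (pp_pos (- (a + t))), (pp_pos (- a)) by lra. ring.
  - lra.
  - lra.
  - intros Hb. replace (m22 J) with (m21 J * 0 + m22 J * 1) by ring.
    apply (onesided _ _ _ D22). exists 1. split; [lra|]. intros t Ht.
    rewrite !Rplus_0_r. rewrite (pp_pos (b + t)), (pp_pos b), (pp_neg (- (b + t))), (pp_neg (- b)) by lra. ring.
  - intros Hb. replace (m22 J) with (m21 J * 0 + m22 J * 1) by ring.
    apply (onesided _ _ _ D22). exists (- b). split; [lra|]. intros t Ht.
    rewrite !Rplus_0_r. rewrite (pp_neg (b + t)), (pp_neg b), (pp_pos (- (b + t))), (pp_pos (- b)) by lra. ring.
Qed.

Lemma lim_fst (xs : nat -> R * R) a b : filterlim xs eventually (locally (a, b)) ->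
  is_lim_seq (fun k => fst (xs k)) a.
Proof. intros H. apply (filterlim_comp _ _ _ xs fst _ _ _ H (continuous_fst a b)). Qed.

Lemma lim_snd (xs : nat -> R * R) a b : filterlim xs eventually (locally (a, b)) ->
  is_lim_seq (fun k => snd (xs k)) b.
Proof. intros H. apply (filterlim_comp _ _ _ xs snd _ _ _ H (continuous_snd a b)). Qed.

Lemma lim_pp (u : nat -> R) (a : R) : is_lim_seq u a -> is_lim_seq (fun k => pospart (u k)) (pospart a).
Proof.
  intros H. apply (filterlim_comp _ _ _ u pospart _ _ _ H).
  apply continuous_ext with (f := P 1). { intros; apply P1. }
  apply P_cont. lra.
Qed.

Lemma lim_sq (u : nat -> R) (a : R) : is_lim_seq u a -> is_lim_seq (fun k => u k ^ 2) (a ^ 2).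
Proof.
  intros H. replace (a ^ 2) with (a * a) by ring.
  apply is_lim_seq_ext with (fun k => u k * u k). { intros; ring. }
  apply is_lim_seq_mult'; assumption.
Qed.

Lemma lim_unique (u : nat -> R) (l1 l2 : R) : is_lim_seq u l1 -> is_lim_seq u l2 -> l1 = l2.
Proof.
  intros H1 H2. apply is_lim_seq_unique in H1. apply is_lim_seq_unique in H2.
  rewrite H1 in H2. injection H2; auto.
Qed.

Lemma ev_lt (x : nat -> R) (a : R) : is_lim_seq x a -> a < 0 -> eventually (fun k => x k < 0).
Proof. intros H Ha. exact (H (fun y => y < 0) (open_lt 0 a Ha)). Qed.

Lemma ev_gt (x : nat -> R) (a : R) : is_lim_seq x a -> 0 < a -> eventually (fun k => 0 < x k).
Proof. intros H Ha. exact (H (fun y => 0 < y) (open_gt 0 a Ha)). Qed.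

Lemma seq_xi (x y u : nat -> R) (a b U : R) : is_lim_seq x a -> is_lim_seq y b ->
  (forall k, 0 <= x k -> u k = pospart (y k) ^ 2) -> (forall k, x k < 0 -> u k = 1) ->
  is_lim_seq u U -> Xi a b U.
Proof.
  intros Hx Hy Hp Hn HU.
  pose proof (lim_sq _ _ (lim_pp _ _ Hy)) as Hc.
  unfold Xi. destruct (Rtotal_order a 0) as [Ha|[Ha|Ha]].
  - right; right. split; [lra|].
    apply (lim_unique u); [exact HU|].
    apply is_lim_seq_ext_loc with (fun _ => 1); [|apply is_lim_seq_const].
    eapply filter_imp; [|exact (ev_lt _ _ Hx Ha)]. intros k Hk. simpl. rewrite Hn; auto.
  - right; left. split; [exact Ha|].
    set (c := pospart b ^ 2) in *.
    assert (E : (U - 1) * (U - c) = 0).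
    { apply (lim_unique (fun k => (u k - 1) * (u k - pospart (y k) ^ 2))).
      - apply is_lim_seq_mult'; apply is_lim_seq_minus'; auto; apply is_lim_seq_const.
      - apply is_lim_seq_ext with (fun _ => 0); [|apply is_lim_seq_const].
        intros k. destruct (Rlt_or_le (x k) 0) as [Hk|Hk].
        + rewrite Hn by auto. ring.
        + rewrite Hp by auto. ring. }
    apply Rmult_integral in E. destruct E as [E|E].
    + replace U with 1 by lra. split; [apply Rmin_l|apply Rmax_l].
    + replace U with c by lra. split; [apply Rmin_r|apply Rmax_r].
  - left. split; [lra|].
    apply (lim_unique u); [exact HU|].
    apply is_lim_seq_ext_loc with (fun k => pospart (y k) ^ 2); [|exact Hc].
    eapply filter_imp; [|exact (ev_gt _ _ Hx Ha)]. intros k Hk. simpl. rewrite Hp; auto; lra.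
Qed.

Lemma lim_jac a b M : limiting_jacobians (grad_phi 2) (a, b) M ->
  Xi a b (m11 M) /\ Xi b a (m22 M) /\
  m12 M = 2 * pospart a * pospart b /\ m21 M = 2 * pospart a * pospart b.
Proof.
  intros [xs [Js [Hx [HJ [L11 [L12 [L21 L22]]]]]]].
  pose proof (lim_fst _ _ _ Hx) as La. pose proof (lim_snd _ _ _ Hx) as Lb.
  assert (HJ' : forall k, has_jac (grad_phi 2) (fst (xs k), snd (xs k)) (Js k))
    by (intros k; rewrite <- surjective_pairing; apply HJ).
  assert (Lc : is_lim_seq (fun k => 2 * pospart (fst (xs k)) * pospart (snd (xs k))) (2 * pospart a * pospart b)).
  { apply is_lim_seq_mult'; [apply is_lim_seq_mult'; [apply is_lim_seq_const|]|]; apply lim_pp; assumption. }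
  split; [|split; [|split]].
  - apply (seq_xi _ _ (fun k => m11 (Js k)) _ _ _ La Lb); [| |exact L11].
    + intros k H. apply (proj1 (jac_info _ _ _ (HJ' k))). exact H.
    + intros k H. apply (jac_info _ _ _ (HJ' k)). exact H.
  - apply (seq_xi _ _ (fun k => m22 (Js k)) _ _ _ Lb La); [| |exact L22].
    + intros k H. apply (jac_info _ _ _ (HJ' k)). exact H.
    + intros k H. apply (jac_info _ _ _ (HJ' k)). exact H.
  - apply (lim_unique (fun k => m12 (Js k))); [exact L12|].
    apply is_lim_seq_ext with (2 := Lc). intros k. symmetry. apply (jac_info _ _ _ (HJ' k)).
  - apply (lim_unique (fun k => m21 (Js k))); [exact L21|].
    apply is_lim_seq_ext with (2 := Lc). intros k. symmetry. apply (jac_info _ _ _ (HJ' k)).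
Qed.

Definition lo (a b : R) : R :=
  if Rlt_dec 0 a then pospart b ^ 2 else if Rlt_dec a 0 then 1 else Rmin 1 (pospart b ^ 2).
Definition hi (a b : R) : R :=
  if Rlt_dec 0 a then pospart b ^ 2 else if Rlt_dec a 0 then 1 else Rmax 1 (pospart b ^ 2).

Lemma Xi_iff a b u : Xi a b u <-> lo a b <= u <= hi a b.
Proof.
  unfold Xi, lo, hi. destruct (Rlt_dec 0 a); [|destruct (Rlt_dec a 0)].
  - split; [intros [[_ H]|[[H _]|[H _]]]; lra | intros H; left; split; lra].
  - split; [intros [[H _]|[[H _]|[_ H]]]; lra | intros H; right; right; split; lra].
  - split; [intros [[H _]|[[_ H]|[H _]]]; lra | intros H; right; left; split; [lra|exact H]].
Qed.

Lemma hull (S : M2 -> Prop) lo1 hi1 lo2 hi2 c :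
  (forall A, S A -> exists u v, lo1 <= u <= hi1 /\ lo2 <= v <= hi2 /\ A = mkM2 u c c v) ->
  forall l : list (R * M2)%type,
  List.Forall (fun wA => 0 <= fst wA /\ S (snd wA)) l ->
  exists X Y,
    fold_right (fun wA acc => M2_add (M2_scale (fst wA) (snd wA)) acc) M2_zero l =
      mkM2 X (fold_right Rplus 0 (map fst l) * c) (fold_right Rplus 0 (map fst l) * c) Y /\
    fold_right Rplus 0 (map fst l) * lo1 <= X <= fold_right Rplus 0 (map fst l) * hi1 /\
    fold_right Rplus 0 (map fst l) * lo2 <= Y <= fold_right Rplus 0 (map fst l) * hi2.
Proof.
  intros HS l. induction l as [|[w A] l IH]; intros HF.
  - exists 0, 0. simpl. unfold M2_zero. split; [f_equal; ring|lra].
  - inversion HF as [|? ? [Hw HA] HF']; subst. simpl in Hw, HA.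
    destruct (IH HF') as [X [Y [E [HX HY]]]].
    destruct (HS A HA) as [u [v [Hu [Hv EA]]]].
    exists (w * u + X), (w * v + Y). simpl. rewrite E, EA.
    split; [unfold M2_add, M2_scale; simpl; f_equal; ring|].
    assert (w * lo1 <= w * u) by (apply Rmult_le_compat_l; lra).
    assert (w * u <= w * hi1) by (apply Rmult_le_compat_l; lra).
    assert (w * lo2 <= w * v) by (apply Rmult_le_compat_l; lra).
    assert (w * v <= w * hi2) by (apply Rmult_le_compat_l; lra).
    split; split; nra.
Qed.

Lemma part3 (p : R * R) (M : M2) : clarke_jac (grad_phi 2) p M ->
     exists u v : R, Xi (fst p) (snd p) u /\ Xi (snd p) (fst p) v /\
       M = mkM2 u (2 * pospart (fst p) * pospart (snd p)) (2 * pospart (fst p) * pospart (snd p)) v.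
Proof.
  destruct p as [a b]. intros [l [HF [Hs HM]]]. simpl.
  destruct (hull (limiting_jacobians (grad_phi 2) (a, b)) (lo a b) (hi a b) (lo b a) (hi b a)
     (2 * pospart a * pospart b)) with (l := l) as [X [Y [E [HX HY]]]]; [|exact HF|].
  - intros A HA. destruct (lim_jac a b A HA) as [H11 [H22 [H12 H21]]].
    exists (m11 A), (m22 A). split; [apply Xi_iff; exact H11|]. split; [apply Xi_iff; exact H22|].
    destruct A; simpl in *; subst; reflexivity.
  - rewrite Hs in E, HX, HY. exists X, Y.
    split; [apply Xi_iff; lra|]. split; [apply Xi_iff; lra|].
    rewrite HM, E. rewrite Rmult_1_l. reflexivity.
Qed.

Theorem proposition2p2 :
  (forall r : R, 2 <= r ->
     C1_with_grad (phi r) (grad_phi r) /\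
     (forall p : R * R, grad_phi r p = (0, 0) <-> phi r p = 0)) /\
  (forall r : R, 2 < r -> C2_with_hess (phi r) (grad_phi r) (hess_phi r)) /\
  (forall (p : R * R) (M : M2), clarke_jac (grad_phi 2) p M ->
     exists u v : R, Xi (fst p) (snd p) u /\ Xi (snd p) (fst p) v /\
       M = mkM2 u (2 * pospart (fst p) * pospart (snd p)) (2 * pospart (fst p) * pospart (snd p)) v).
Proof.
  split; [|split].
  - intros r Hr. split; [split|].
    + intros p. apply part1_grad; exact Hr.
    + intros p. apply part1_cont; exact Hr.
    + intros p. apply part1_zero; exact Hr.
  - intros r Hr. split; [split|split].
    + intros p. apply part1_grad; lra.
    + intros p. apply part1_cont; lra.
    + intros p. apply part2_jac; exact Hr.
    + apply part2_cont; exact Hr.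
  - exact part3.
Qed.
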